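(* Let $n\ge 1$ and $k\ge 1$ be integers and let $\beta\in\mathbb{C}$. Then $$G_{(k)}(\underbrace{1,1,\dots,1}_{n}\mid \beta)=\binom{n+k-1}{k}\,{}_2F_1\!\left(\begin{matrix}k,\;1-n\\ k+1\end{matrix};-\beta\right).$$
   Context: Let $[n]=\{1,\dots,n\}$. For a partition $\lambda=(\lambda_1\ge\lambda_2\ge\cdots)$ with at most $n$ nonzero parts, identified with its Young diagram $\{(i,j): 1\le j\le\lambda_i\}$ (row index $i$ increasing downward, column index $j$ increasing to the right), a set-valued tableau of shape $\lambda$ with entries in $[n]$ assigns to every box $(i,j)$ a nonempty subset $T_{i,j}\subseteq[n]$ such that $\max T_{i,j}\le\min T_{i,j+1}$ and $\max T_{i,j}<\min T_{i+1,j}$ whenever these boxes exist. Let $\mathrm{SVT}(\lambda,n)$ be the set of these tableaux. For $T\in\mathrm{SVT}(\lambda,n)$, $|T|=\sum_{(i,j)}|T_{i,j}|$, $\omega_m(T)$ is the number of boxes whose set contains $m$, and $x^{\omega(T)}=\prod_{m=1}^n x_m^{\omega_m(T)}$. The (stable) Grothendieck polynomial is $G_\lambda(x_1,\dots,x_n\mid\beta)=\sum_{T\in\mathrm{SVT}(\lambda,n)}\beta^{|T|-|\lambda|}x^{\omega(T)}$, where $|\lambda|=\sum_i\lambda_i$. $(a)_0=1$, $(a)_m=a(a+1)\cdots(a+m-1)$. ${}_2F_1\!\left(\begin{smallmatrix}a,\,b\\ c\end{smallmatrix};z\right)=\sum_{m\ge0}\frac{(a)_m(b)_m}{(c)_m}\frac{z^m}{m!}$;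 when $b$ is a nonpositive integer this is a finite sum (a polynomial in $z$), which is the case here. *)

(* Defs.v *)
From HB Require Import structures.
From mathcomp Require Import all_boot all_order all_algebra.
From mathcomp Require Import reals complex.
Set Implicit Arguments. Unset Strict Implicit. Unset Printing Implicit Defensive.
Import Order.TTheory GRing.Theory Num.Theory.
Local Open Scope ring_scope.

(* Conventions: a partition la is a seq nat (la_1 >= la_2 >= ...), row i
   (0-indexed here) has length nth 0 la i.  Boxes (i,j) are 0-indexed
   pairs; box (i,j) of the paper is (i-1,j-1) here.  An entry m : 'I_n
   stands for the value m+1 of [n]; the shift preserves all comparisons. *)

Definition is_partition (la : seq nat) : bool := sorted geq la.

Definition lawidth (la : seq nat) : nat := \max_(a <- la) a.

Definition in_diag (la : seq nat) (i j : nat) : bool := (j < nth 0%N la i)%N.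

Definition filling (n : nat) (la : seq nat) :=
  {ffun 'I_(size la) * 'I_(lawidth la) -> {set 'I_n}}.

Definition setle n (A B : {set 'I_n}) : bool :=
  [forall x in A, forall y in B, (x <= y)%N].
Definition setlt n (A B : {set 'I_n}) : bool :=
  [forall x in A, forall y in B, (x < y)%N].

Definition is_svt (n : nat) (la : seq nat) (T : filling n la) : bool :=
  [forall b : 'I_(size la) * 'I_(lawidth la), in_diag la b.1 b.2 == (T b != set0)] &&
  [forall b1 : 'I_(size la) * 'I_(lawidth la), forall b2 : 'I_(size la) * 'I_(lawidth la),
     (in_diag la b1.1 b1.2 && in_diag la b2.1 b2.2) ==>
     ((((b2.1 : nat) == b1.1) && ((b2.2 : nat) == b1.2.+1)) ==> setle (T b1) (T b2)) &&
     ((((b2.1 : nat) == b1.1.+1) && ((b2.2 : nat) == b1.2)) ==> setlt (T b1) (T b2))].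

Definition svt_size n la (T : filling n la) : nat := \sum_b #|T b|.

Definition svt_omega n la (T : filling n la) (m : 'I_n) : nat :=
  #|[set b | m \in T b]|.

Definition groth {C : comRingType} (n : nat) (la : seq nat)
    (x : 'I_n -> C) (beta : C) : C :=
  \sum_(T : filling n la | is_svt T)
     beta ^+ (svt_size T - sumn la) * \prod_(m < n) x m ^+ svt_omega T m.

Definition poch {C : comRingType} (a : C) (m : nat) : C :=
  \prod_(i < m) (a + i%:R).

(* 2F1(a, -d; c; z) for d : nat (a nonpositive integer b = -d): the series
   terminates, all terms with m > d vanish since (-d)_m = 0. *)
Definition hyp2F1_negint {C : fieldType} (a : C) (d : nat) (c z : C) : C :=
  \sum_(m < d.+1)
     poch a m * poch (- d%:R) m / poch c m * z ^+ m / (m`!)%:R.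

Arguments groth {C} n la x beta.
Arguments hyp2F1_negint {C} a d c z.

(* Main.v *)
Require Import Defs.
From HB Require Import structures.
From mathcomp Require Import all_boot all_order all_algebra.
From mathcomp Require Import reals complex.
From mathcomp Require Import ring lra zify.
Import GRing.Theory Num.Theory.
Local Open Scope ring_scope.


Lemma pochS {C : comRingType} (a : C) m : poch a m.+1 = poch a m * (a + m%:R).
Proof. by rewrite /poch big_ord_recr. Qed.

Lemma poch0 {C : comRingType} (a : C) : poch a 0 = 1.
Proof. by rewrite /poch big_ord0. Qed.

Lemma poch_nat {C : comRingType} a m : poch (a%:R : C) m = (\prod_(i < m) (a + i))%:R.
Proof. by rewrite /poch natr_prod; apply: eq_bigr => i _; rewrite natrD. Qed.

Lemma poch_ratio {C : comRingType} k m :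
  poch (k%:R : C) m * (k + m)%:R = k%:R * poch ((k+1)%:R : C) m.
Proof.
elim: m => [|m IH]; first by rewrite !poch0 addn0 mul1r mulr1.
rewrite !pochS -!natrD IH -!mulrA; congr (_ * (_ * _%:R)); lia.
Qed.

Lemma poch_neg {C : comRingType} d m :
  poch (- (d%:R) : C) m * (-1) ^+ m = ('C(d, m) * m`!)%:R.
Proof.
elim: m => [|m IH]; first by rewrite poch0 mul1r bin0 fact0.
rewrite pochS exprS.
have -> : poch (- d%:R : C) m * (- d%:R + m%:R) * (-1 * (-1) ^+ m) =
   (poch (- d%:R : C) m * (-1) ^+ m) * (d%:R - m%:R) by ring.
rewrite IH.
have -> : ('C(d, m.+1) * m.+1`!)%N = ('C(d, m) * m`! * (d - m))%N.
  by rewrite factS mulnA [('C(d, m.+1) * m.+1)%N]mulnC mul_bin_left; ring.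
case: (leqP m d) => hmd; first by rewrite [RHS]natrM natrB.
by rewrite bin_small // !mul0n !mul0r.
Qed.
Lemma trinom (a b m : nat) :
  ('C(a + b, a) * 'C(a, m) = 'C(a + b, b + m) * 'C(b + m, m))%N.
Proof.
case: (leqP m a) => hma; last first.
  by rewrite (bin_small hma) muln0 bin_small ?mul0n // addnC ltn_add2l.
have h : (0 < m`! * (a - m)`! * b`!)%N by rewrite !muln_gt0 !fact_gt0.
have e1 : ('C(a + b, a) * 'C(a, m) * (m`! * (a - m)`! * b`!) = (a + b)`!)%N.
  rewrite -(bin_fact (leq_addr b a)) addKn -(bin_fact hma).
  ring.
have e2 : ('C(a + b, b + m) * 'C(b + m, m) * (m`! * (a - m)`! * b`!) = (a + b)`!)%N.
  have hbm : (b + m <= a + b)%N by rewrite addnC leq_add2r.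
  rewrite -(bin_fact hbm).
  have -> : (a + b - (b + m) = a - m)%N by rewrite addnC subnDl.
  rewrite -(bin_fact (leq_addl b m)) addnK.
  ring.
have : (('C(a + b, a) * 'C(a, m)) * (m`! * (a - m)`! * b`!) ==
        ('C(a + b, b + m) * 'C(b + m, m)) * (m`! * (a - m)`! * b`!))%N
  by rewrite e1 e2.
by rewrite eqn_pmul2r // => /eqP.
Qed.

Lemma hockey K m n : (\sum_(j < n) 'C(j + K, K + m))%N = 'C(n + K, (K + m).+1).
Proof.
elim: n => [|n IH]; first by rewrite big_ord0 add0n bin_small // ltnS leq_addr.
by rewrite big_ord_recr /= IH addSn binS addnC.
Qed.

Lemma coef_id K m n :
  (\sum_(j < n) ('C(j + K, j) * 'C(j, m)))%N = ('C(n + K, (K + m).+1) * 'C(K + m, m))%N.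
Proof.
under eq_bigr => j _ do rewrite trinom.
by rewrite -big_distrl /= hockey.
Qed.

Lemma natid N K m :
  ('C((N + K).+1, K.+1) * K.+1 * 'C(N, m))%N =
  ((K.+1 + m) * ('C((N + K).+1, (K + m).+1) * 'C(K + m, m)))%N.
Proof.
rewrite [('C(_, _) * K.+1)%N]mulnC -mul_bin_diag /= addSn mulnA -mul_bin_diag /=.
rewrite -!mulnA; congr (_ * _)%N.
by rewrite -{1}(bin_sub (leq_addl N K)) addnK trinom.
Qed.

Lemma expD1n_widen {C : comRingType} (b : C) N j : (j <= N)%N ->
  (b + 1) ^+ j = \sum_(i < N.+1) b ^+ i *+ 'C(j, i).
Proof.
move=> hj; rewrite exprD1n (big_ord_widen N.+1 (fun i => b ^+ i *+ 'C(j, i))) //.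
rewrite big_mkcond; apply: eq_bigr => i _; case: ifP => // h.
by rewrite bin_small ?mulr0n // ltnNge -ltnS h.
Qed.

Lemma term_id (F : numFieldType) (b : F) N K m : (m <= N)%N ->
  'C((N + K).+1, K.+1)%:R *
   (poch (K.+1)%:R m * poch (- N%:R) m / poch (K.+1 + 1)%:R m * (- b) ^+ m / (m`!)%:R)
  = ('C((N + K).+1, (K + m).+1) * 'C(K + m, m))%:R * b ^+ m.
Proof.
move=> hm.
have nz : forall x : nat, (0 < x)%N -> (x%:R : F) != 0.
  by move=> x hx; rewrite pnatr_eq0 -lt0n.
have hS : (1 + K%:R + m%:R : F) != 0.
  have := nz (1 + K + m)%N isT; by rewrite !natrD mulr1n.
have hP3 : poch (K.+1 + 1)%:R m != 0 :> F.
  rewrite poch_nat nz // prodn_gt0 // => i; by rewrite addn_gt0 addn1.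
have eP1 : poch (K.+1)%:R m = (K.+1)%:R * poch (K.+1 + 1)%:R m / (K.+1 + m)%:R :> F.
  by rewrite -poch_ratio; field.
have eP2 : poch (- N%:R) m * (- b) ^+ m = ('C(N, m) * m`!)%:R * b ^+ m :> F.
  by rewrite exprNn mulrA poch_neg.
have eX : (('C((N + K).+1, (K + m).+1) * 'C(K + m, m))%:R : F) =
   ('C((N + K).+1, K.+1) * K.+1 * 'C(N, m))%:R / (K.+1 + m)%:R.
  by rewrite natid natrM; field.
have -> : poch (K.+1)%:R m * poch (- N%:R) m / poch (K.+1 + 1)%:R m * (- b) ^+ m / (m`!)%:R
   = poch (K.+1)%:R m * (poch (- N%:R) m * (- b) ^+ m) / poch (K.+1 + 1)%:R m / (m`!)%:R :> F.
  by rewrite !mulrA; congr (_ * _); rewrite mulrAC.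
rewrite eP2 eP1 eX !natrM.
field.
by rewrite hS hP3 nz ?fact_gt0.
Qed.

Lemma Qclosed (F : numFieldType) (b : F) N K :
  \sum_(j < N.+1) 'C(j + K, j)%:R * (b + 1) ^+ j =
  'C((N + K).+1, K.+1)%:R * hyp2F1_negint (K.+1)%:R N ((K.+1 + 1)%:R) (- b).
Proof.
rewrite /hyp2F1_negint big_distrr /=.
transitivity (\sum_(m < N.+1) ('C((N + K).+1, (K + m).+1) * 'C(K + m, m))%:R * b ^+ m); last first.
  by apply: eq_bigr => m _; rewrite term_id // -ltnS.
transitivity (\sum_(j < N.+1) \sum_(m < N.+1) ('C(j + K, j) * 'C(j, m))%:R * b ^+ m).
  apply: eq_bigr => j _; rewrite (expD1n_widen b N j (ltn_ord j)) big_distrr /=.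
  by apply: eq_bigr => i _; rewrite natrM -mulr_natr; ring.
rewrite exchange_big /=; apply: eq_bigr => m _.
by rewrite -big_distrl /= -natr_sum coef_id addSn.
Qed.

Set Implicit Arguments. Unset Strict Implicit. Unset Printing Implicit Defensive.


Definition chain n k (f : {ffun 'I_k -> {set 'I_n}}) : bool :=
  [forall i, f i != set0] &&
  [forall i : 'I_k, forall j : 'I_k, ((j : nat) == i.+1) ==> setle (f i) (f j)].
Definition fb n k (lo : nat) (f : {ffun 'I_k -> {set 'I_n}}) : bool :=
  [forall i : 'I_k, ((i : nat) == 0%N) ==> [forall x in f i, (lo <= x)%N]].
Definition mx n (S : {set 'I_n}) : nat := (\max_(x in S) (x : nat))%N.
Definition fcons (A : finType) k (S : A) (g : {ffun 'I_k -> A}) : {ffun 'I_k.+1 -> A} :=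
  [ffun i => if unlift ord0 i is Some j then g j else S].

Lemma fcons0 (A : finType) k (S : A) (g : {ffun 'I_k -> A}) : fcons S g ord0 = S :> A.
Proof. by rewrite ffunE unlift_none. Qed.
Lemma fconsL (A : finType) k (S : A) (g : {ffun 'I_k -> A}) j : fcons S g (lift ord0 j) = g j.
Proof. by rewrite ffunE liftK. Qed.

Lemma forallS k (P : pred 'I_k.+1) :
  [forall i, P i] = P ord0 && [forall j : 'I_k, P (lift ord0 j)].
Proof.
apply/forallP/andP => [H|[H0 /forallP H] i]; first by split=> //; apply/forallP.
by case: (unliftP ord0 i) => [j|] ->.
Qed.

Lemma sum_fcons {C : comRingType} (A : finType) k (P : pred {ffun 'I_k.+1 -> A})
   (F : {ffun 'I_k.+1 -> A} -> C) :
  \sum_(f | P f) F f = \sum_(S : A) \sum_(g | P (fcons S g)) F (fcons S g).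
Proof.
rewrite pair_big_dep /=.
rewrite (reindex (fun p : A * {ffun 'I_k -> A} => fcons p.1 p.2)) /=.
  by apply: eq_bigl => p.
exists (fun f => (f ord0, [ffun j => f (lift ord0 j)])) => [[S g] _|f _] /=.
  by rewrite fcons0; congr (_, _); apply/ffunP => j; rewrite ffunE fconsL.
apply/ffunP => i; rewrite ffunE.
by case: (unliftP ord0 i) => [j|] -> /=; rewrite ?ffunE.
Qed.

Lemma chain_fcons n k (S : {set 'I_n}) (g : {ffun 'I_k -> {set 'I_n}}) :
  chain (fcons S g) =
  [&& S != set0, chain g & [forall j : 'I_k, ((j : nat) == 0%N) ==> setle S (g j)]].
Proof.
apply/idP/idP.
  move=> /andP[/forallP Hne /forallP Hc].
  apply/and3P; split.
  - by have := Hne ord0; rewrite fcons0.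
  - apply/andP; split; apply/forallP => i.
      by have := Hne (lift ord0 i); rewrite fconsL.
    apply/forallP => j; apply/implyP => hji.
    have := Hc (lift ord0 i); move/forallP/(_ (lift ord0 j)).
    by rewrite !fconsL !lift0 /= eqSS hji.
  - apply/forallP => j; apply/implyP => hj0.
    have := Hc ord0; move/forallP/(_ (lift ord0 j)).
    by rewrite fcons0 fconsL lift0 /= eqSS hj0.
move=> /and3P[hS /andP[/forallP hne /forallP hc] /forallP h0].
apply/andP; split.
  apply/forallP => i; case: (unliftP ord0 i) => [j|] ->; by rewrite ?fconsL ?fcons0.
apply/forallP => i; apply/forallP => j; apply/implyP.
case: (unliftP ord0 i) => [i'|] ->; case: (unliftP ord0 j) => [j'|] ->;
  rewrite ?fconsL ?fcons0 ?lift0 //= eqSS => hji.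
- by move/forallP: (hc i') => /(_ j') /implyP; apply.
- by move/implyP: (h0 j'); apply.
Qed.

Lemma fb_fcons n k lo (S : {set 'I_n}) (g : {ffun 'I_k -> {set 'I_n}}) :
  fb lo (fcons S g) = [forall x in S, (lo <= x)%N].
Proof.
rewrite /fb forallS fcons0 /=.
have -> : [forall j : 'I_k, ((lift ord0 j : nat) == 0%N) ==> [forall x in g j, (lo <= x)%N]]
  = true.
  by apply/forallP => j; rewrite lift0.
by rewrite andbT.
Qed.

Lemma setle_mx n (S T : {set 'I_n}) : S != set0 ->
  setle S T = [forall y in T, (mx S <= y)%N].
Proof.
move=> hS.
have [x0 x0S ex] := eq_bigmax_cond (fun x : 'I_n => (x : nat)) (eq_ind_r is_true hS (card_gt0 S)).
apply/forallP/forallP => H y.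
  apply/implyP => yT.
  have := H x0; rewrite x0S /= => /forallP/(_ y); rewrite yT /mx ex //.
apply/implyP => yS; apply/forallP => z; apply/implyP => zT.
have := H z; rewrite zT /= => h; apply: leq_trans h.
by rewrite /mx; apply: leq_bigmax_cond.
Qed.

Definition Dw {C : comRingType} n k (b : C) (lo : nat) : C :=
  \sum_(f : {ffun 'I_k -> {set 'I_n}} | chain f && fb lo f)
     \prod_(i < k) b ^+ (#|f i|.-1).

Lemma Drec {C : comRingType} n k (b : C) lo :
  Dw n k.+1 b lo =
  \sum_(S : {set 'I_n} | (S != set0) && [forall x in S, (lo <= x)%N])
     b ^+ (#|S|.-1) * Dw n k b (mx S).
Proof.
rewrite /Dw sum_fcons (bigID (fun S : {set 'I_n} => (S != set0) && [forall x in S, (lo <= x)%N])) /=.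
rewrite [X in _ + X]big1 ?addr0; last first.
  move=> S hS; apply: big_pred0 => g.
  rewrite chain_fcons fb_fcons.
  by case: (S != set0) hS; case: [forall x in S, (lo <= x)%N] => //=; rewrite andbF.
apply: eq_bigr => S /andP[hS hlo]; rewrite big_distrr /=.
apply: eq_big => g.
  rewrite chain_fcons fb_fcons hS hlo /= andbT; congr (_ && _).
  rewrite /fb; apply: eq_forallb => j; by rewrite setle_mx.
move=> _; rewrite big_ord_recl fcons0; congr (_ * _).
by apply: eq_bigr => i _; rewrite fconsL.
Qed.

Definition Qf {C : comRingType} (q : C) (N k : nat) : C :=
  \sum_(j < N) 'C(j + k - 1, j)%:R * q ^+ j.

Lemma QS {C : comRingType} (q : C) N k :
  Qf q N.+1 k.+1 = Qf q N.+1 k + q * Qf q N k.+1.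
Proof.
rewrite /Qf !big_ord_recl big_distrr /= -addrA; congr (_ + _).
  by rewrite !add0n !bin0.
rewrite -big_split /=; apply: eq_bigr => j _.
have -> : (bump 0 j + k.+1 - 1 = (j + k).+1)%N by rewrite /bump /=; lia.
have -> : (bump 0 j + k - 1 = j + k)%N by rewrite /bump /=; lia.
have -> : (j + k.+1 - 1 = j + k)%N by lia.
rewrite /bump /= binS natrD exprS; ring.
Qed.

Lemma Qsum {C : comRingType} (q : C) N k :
  \sum_(t < N) q ^+ t * Qf q (N - t) k = Qf q N k.+1.
Proof.
elim: N => [|N IH]; first by rewrite big_ord0 /Qf big_ord0.
rewrite big_ord_recl /= expr0 mul1r subn0 QS; congr (_ + _).
rewrite -IH big_distrr /=; apply: eq_bigr => t _.
by rewrite /bump /= add1n subSS exprS mulrA.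
Qed.

Lemma big_range (R : Type) (idx : R) (op : Monoid.com_law idx) n lo hi (G : nat -> R) :
  (hi <= n)%N ->
  \big[op/idx]_(i < n | (lo <= i < hi)%N) G i = \big[op/idx]_(lo <= i < hi) G i.
Proof.
move=> hn.
rewrite -(big_mkord (fun i => (lo <= i < hi)%N) G) (big_nat_widen lo hi n) // (big_nat_widenl lo 0) //.
by apply: eq_bigl => i /=; rewrite andbC.
Qed.

Lemma card_interval n lo a : (a <= n)%N ->
  #|[set x : 'I_n | (lo <= x < a)%N]| = (a - lo)%N.
Proof.
move=> han.
rewrite -sum1_card.
rewrite (eq_bigl (fun x : 'I_n => (lo <= x < a)%N)); last by move=> x; rewrite inE.
rewrite (big_range _ _ (fun _ => 1%N)) //.
by rewrite sum_nat_const_nat muln1.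
Qed.

Lemma subset_sum {C : comRingType} (T : finType) (A : {set T}) (b : C) :
  \sum_(S : {set T} | S \subset A) b ^+ #|S| = (b + 1) ^+ #|A|.
Proof.
rewrite exprD1n.
transitivity (\sum_(S : {set T} | S \subset A) \sum_(m < #|A|.+1 | (m : nat) == #|S|) b ^+ #|S|).
  apply: eq_bigr => S hS.
  have hm : (#|S| < #|A|.+1)%N by rewrite ltnS subset_leq_card.
  by rewrite (big_pred1 (Ordinal hm)).
rewrite (exchange_big_dep xpredT) //=; apply: eq_bigr => m _.
rewrite (eq_bigr (fun _ => b ^+ m)); last by move=> S /andP[_ /eqP ->].
rewrite (eq_bigl (fun S => S \in [set S : {set T} | S \subset A & #|S| == m])).
  by rewrite sumr_const cards_draws.
by move=> S; rewrite inE eq_sym.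
Qed.

Lemma inner {C : comRingType} n (a : 'I_n) lo (b : C) : (lo <= a)%N ->
  \sum_(S : {set 'I_n} | ((S != set0) && [forall x in S, (lo <= x)%N]) && ((a : nat) == mx S))
     b ^+ (#|S|.-1) = (b + 1) ^+ (a - lo).
Proof.
move=> hlo.
rewrite (reindex_onto (fun T => a |: T) (fun S => S :\ a)) /=; last first.
  move=> S /andP[/andP[hS _] /eqP ha]; apply: setD1K.
  have [x0 x0S ex] := eq_bigmax_cond (fun x : 'I_n => (x : nat)) (eq_ind_r is_true hS (card_gt0 S)).
  have -> : a = x0 by apply: val_inj; rewrite /= ha /mx ex.
  exact: x0S.
have hc := @card_interval n lo a (ltnW (ltn_ord a)).
rewrite -hc -subset_sum.
have anA : a \notin [set x : 'I_n | (lo <= x < a)%N] by rewrite inE ltnn andbF.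
apply: eq_big => T.
  apply/idP/idP.
    move=> /andP[/andP[/andP[_ hb] /eqP hm] /eqP hT].
    apply/subsetP => x xT; rewrite inE.
    have xa : x != a by move: xT; rewrite -hT !inE => /andP[].
    have xaT : x \in a |: T by rewrite in_setU1 xT orbT.
    rewrite (implyP (forallP hb x) xaT) /=.
    rewrite ltn_neqAle val_eqE xa /= hm.
    by rewrite /mx; apply: leq_bigmax_cond.
  move=> hTA.
  have aT : a \notin T by apply/negP => /(subsetP hTA); rewrite (negbTE anA).
  rewrite setU1K // eqxx andbT; apply/andP; split; first (apply/andP; split).
  - by apply/set0Pn; exists a; exact: setU11.
  - apply/forallP => x; apply/implyP; rewrite in_setU1 => /orP[/eqP->//|/(subsetP hTA)].
    by rewrite inE => /andP[].
  - rewrite eqn_leq; apply/andP; split; first by rewrite /mx; apply: leq_bigmax_cond; exact: setU11.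
    apply/bigmax_leqP => x; rewrite in_setU1 => /orP[/eqP->//|/(subsetP hTA)].
    by rewrite inE => /andP[_ /ltnW].
move=> /andP[_ /eqP hT].
have aT : a \notin T by rewrite -hT !inE eqxx.
by rewrite cardsU1 aT.
Qed.

Lemma mx_in n (S : {set 'I_n}) : S != set0 -> exists2 x0, x0 \in S & mx S = x0.
Proof.
move=> hS.
have [x0 x0S ex] := eq_bigmax_cond (fun x : 'I_n => (x : nat)) (eq_ind_r is_true hS (card_gt0 S)).
by exists x0.
Qed.

Lemma Dgroup {C : comRingType} n lo (b : C) (G : nat -> C) :
  \sum_(S : {set 'I_n} | (S != set0) && [forall x in S, (lo <= x)%N]) b ^+ (#|S|.-1) * G (mx S)
  = \sum_(a < n | (lo <= a)%N) (b + 1) ^+ (a - lo) * G a.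
Proof.
transitivity (\sum_(S : {set 'I_n} | (S != set0) && [forall x in S, (lo <= x)%N])
   \sum_(a < n | (a : nat) == mx S) b ^+ (#|S|.-1) * G (mx S)).
  apply: eq_bigr => S /andP[hS _].
  have [x0 x0S ex] := mx_in hS.
  by rewrite (big_pred1 x0) // => a; rewrite ex.
rewrite (exchange_big_dep (fun a : 'I_n => (lo <= a)%N)) /=; last first.
  move=> S a /andP[hS hb] /eqP ->.
  have [x0 x0S ex] := mx_in hS.
  by rewrite ex; exact: (implyP (forallP hb x0) x0S).
apply: eq_bigr => a hlo.
rewrite -(inner b hlo) big_distrl /=.
by apply: eq_bigr => S /andP[_ /eqP <-].
Qed.

Lemma Dbase {C : comRingType} n (b : C) lo : Dw n 0 b lo = 1.
Proof.
rewrite /Dw (eq_bigr (fun _ => 1)) => [|f _]; last by rewrite big_ord0.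
rewrite (eq_bigl (fun f => f \in [set: {ffun 'I_0 -> {set 'I_n}}])) => [|f].
  by rewrite sumr_const cardsT card_ffun card_ord expn0.
rewrite inE /chain /fb.
by apply/andP; split; [apply/andP; split|]; apply/forallP => -[].
Qed.

Lemma Dclosed {C : comRingType} n (b : C) k lo : (lo < n)%N ->
  Dw n k b lo = Qf (b + 1) (n - lo) k.
Proof.
elim: k lo => [|k IH] lo hlo.
  rewrite Dbase /Qf.
  have hN : (0 < n - lo)%N by rewrite subn_gt0.
  case: (n - lo)%N hN => [//|N _].
  rewrite big_ord_recl /= big1 ?addr0 ?expr0 ?mulr1 //.
  move=> j _; rewrite /bump /= add1n addn0 subn1 /= bin_small ?mul0r //.
rewrite Drec (@Dgroup C n lo b (fun a => Dw n k b a)).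
rewrite (eq_bigr (fun a : 'I_n => (b + 1) ^+ (a - lo) * Qf (b + 1) (n - a) k)); last first.
  by move=> a _; rewrite IH.
rewrite (eq_bigl (fun a : 'I_n => (lo <= a < n)%N)) => [|a]; last by rewrite ltn_ord andbT.
rewrite (big_range _ _ (fun a => (b + 1) ^+ (a - lo) * Qf (b + 1) (n - a) k) (leqnn n)).
have := big_addn 0 n lo xpredT (fun a => (b + 1) ^+ (a - lo) * Qf (b + 1) (n - a) k).
rewrite add0n => ->.
rewrite big_mkord -Qsum; apply: eq_bigr => i _.
by rewrite addnK addnC subnDA.
Qed.


Lemma lawidth1 k : lawidth [:: k] = k.
Proof. by rewrite /lawidth big_cons big_nil maxn0. Qed.

Lemma sum_ones k : (\sum_(j < k) 1 = k)%N.
Proof. by rewrite big_const_ord iter_addn_0 mul1n. Qed.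

Lemma conv {C : comRingType} n k (b : C) :
  groth n [:: k] (fun _ => 1) b = Dw n k b 0.
Proof.
rewrite /groth (eq_bigr (fun T => b ^+ (svt_size T - k))) => [|T _]; last first.
  rewrite big1 ?mulr1; last by move=> m _; rewrite expr1n.
  by rewrite /= addn0.
rewrite /is_svt /svt_size /filling.
move: (lawidth [:: k]) (lawidth1 k) => w hw.
subst w.
rewrite /Dw (reindex (fun f : {ffun 'I_k -> {set 'I_n}} => [ffun p : 'I_1 * 'I_k => f p.2])) /=;
  last first.
  exists (fun T : {ffun 'I_1 * 'I_k -> {set 'I_n}} => [ffun j => T (ord0, j)]) => [f _|T _].
    by apply/ffunP => j; rewrite !ffunE.
  by apply/ffunP => -[i j]; rewrite !ffunE /= (ord1 i).
apply: eq_big => f.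
  have fbT : fb 0 f = true.
    by apply/forallP => i; apply/implyP => _; apply/forallP => x; apply/implyP.
  rewrite fbT andbT /chain; apply/idP/idP.
    move=> /andP[/forallP H1 /forallP H2]; apply/andP; split.
      apply/forallP => j; have := H1 (ord0, j).
      by rewrite ffunE /in_diag /= ltn_ord => /eqP <-.
    apply/forallP => i; apply/forallP => j; apply/implyP => hji.
    have := H2 (ord0, i); move/forallP/(_ (ord0, j)).
    by rewrite /in_diag /= !ltn_ord /= hji /= !ffunE => /andP[].
  move=> /andP[/forallP H1 /forallP H2]; apply/andP; split.
    by apply/forallP => -[i j]; rewrite (ord1 i) /in_diag /= ltn_ord ffunE (H1 j).
  apply/forallP => -[i1 j1]; apply/forallP => -[i2 j2].
  rewrite (ord1 i1) (ord1 i2) /in_diag /= !ltn_ord /= !ffunE /=.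
  rewrite andbT; apply/implyP => h.
  by move/forallP: (H2 j1) => /(_ j2) /implyP; apply.
move=> /andP[/forallP H0 _].
have H1 : forall j, f j != set0.
  by move=> j; have := H0 (ord0, j); rewrite ffunE /in_diag /= ltn_ord => /eqP <-.
under eq_bigr do rewrite ffunE.
rewrite -(pair_big (fun _ : 'I_1 => true) (fun _ : 'I_k => true) (fun (_ : 'I_1) (j : 'I_k) => #|f j|)) /= big_ord1.
have e : (\sum_(j < k) #|f j| = \sum_(j < k) (#|f j|.-1) + k)%N.
  rewrite -[X in (_ + X)%N]sum_ones -big_split /=; apply: eq_bigr => j _.
  by rewrite addn1 prednK // card_gt0 (H1 j).
by rewrite e addnK expr_sum.
Qed.


Theorem proposition3p1 (R : realType) (n k : nat) (beta : R[i]) :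
  (1 <= n)%N -> (1 <= k)%N ->
  groth n [:: k] (fun _ => 1) beta =
  ('C(n + k - 1, k))%:R *
    hyp2F1_negint (k%:R) (n - 1) ((k + 1)%:R) (- beta).
Proof.
case: n => [//|N] _; case: k => [//|K] _.
rewrite conv Dclosed // subn0 /Qf.
have -> : (N.+1 + K.+1 - 1 = (N + K).+1)%N by lia.
have -> : (N.+1 - 1 = N)%N by lia.
rewrite -Qclosed; apply: eq_bigr => j _.
by have -> : (j + K.+1 - 1 = j + K)%N by lia.
Qed.
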